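(* Let $c,n\in\mathbb N$ with $c\ge2$, $n\ge2$, and let $s\in(0,1/2]$. For any real $\gamma\ge 2-(n-1)(2s-1)$, \[\sum_{\substack{(a_1,\ldots,a_n)\in\mathbb N^n\\ c\le a_1<a_2<\cdots<a_n}}\frac{1}{(a_1\cdots a_{n-1})^{2s}a_n^{\gamma}}\le\frac{1}{(c-1)^{\gamma+n(2s-1)-2s}}.\] *)

(* Defs.v *)
From HB Require Import structures.
From mathcomp Require Import all_boot all_order all_algebra.
From mathcomp Require Import all_classical all_reals all_analysis.
Set Implicit Arguments. Unset Strict Implicit. Unset Printing Implicit Defensive.
Import Order.TTheory GRing.Theory Num.Theory.
Local Open Scope ring_scope.

Definition admissible (c : nat) (a : seq nat) : bool :=
  all (fun x => (c <= x)%N) a && sorted ltn a.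

(* 1 / ((a_1 ... a_{n-1})^{2s} * a_n^gamma), with a_i = nth 0 a (i-1) *)
Definition summand (R : realType) (n : nat) (s gamma : R) (a : seq nat) : R :=
  (((\prod_(i < n.-1) (nth 0%N a i)%:R) `^ (2 * s)) *
   ((nth 0%N a n.-1)%:R `^ gamma))^-1.

(* Main.v *)
Require Import Defs.
From HB Require Import structures.
From mathcomp Require Import all_boot all_order all_algebra.
From mathcomp Require Import all_classical all_reals all_analysis.
From mathcomp Require Import finmap.
From mathcomp Require Import ring lra.
Import Order.TTheory GRing.Theory Num.Theory.
Local Open Scope classical_set_scope.
Local Open Scope ring_scope.

Section Aux.
Variable R : realType.

Lemma step_ineq (y e : R) : 1 <= y -> 1 <= e ->
  ((y + 1) `^ (e + 1))^-1 + ((y + 1) `^ e)^-1 <= (y `^ e)^-1.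
Proof.
move=> y1 e1.
have y0 : 0 < y by lra.
set a := y + 1.
have a0 : 0 < a by rewrite /a; lra.
have hu : a `^ e = y `^ e * (a / y) `^ e.
  rewrite -powRM; last 2 first.
  - exact: ltW.
  - by rewrite divr_ge0 // ltW.
  by rewrite [y * _]mulrC divfK // lt0r_neq0.
have h1 : a / y <= (a / y) `^ e.
  by apply: le1r_powR => //; rewrite ler_pdivlMr // mul1r /a; lra.
have hD : a `^ (e + 1) = a `^ e * a.
  by rewrite powRD ?powRr1 ?(lt0r_neq0 a0) ?implybT // ltW.
rewrite hD.
set u := a `^ e; set v := y `^ e.
have v0 : 0 < v by rewrite /v powR_gt0.
have u0 : 0 < u by rewrite /u powR_gt0.
have h2 : v * (a / y) <= u by rewrite /u hu ler_wpM2l // ltW.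
have h3 : v * a <= u * y.
  have := h2; rewrite -(ler_pM2r y0) -mulrA divfK // lt0r_neq0 //.
have h4 : v <= u.
  have : v * y <= u * y by apply: le_trans h3; rewrite ler_wpM2l ?ltW // /a; lra.
  by rewrite ler_pM2r.
have -> : (u * a)^-1 + u^-1 = (1 + a) / (u * a).
  by field; rewrite ?lt0r_neq0.
rewrite ler_pdivrMr ?mulr_gt0 // mulrC ler_pdivlMr //.
rewrite /a in h3 *; nra.
Qed.

Lemma tele (e : R) (b M : nat) : 1 <= e -> (1 <= b)%N ->
  \sum_(x <- iota b.+1 M) ((x%:R : R) `^ (e + 1))^-1 <= ((b%:R : R) `^ e)^-1.
Proof.
move=> e1; elim: M b => [|M IH] b b1.
  by rewrite big_nil invr_ge0 powR_ge0.
rewrite /= big_cons.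
apply: le_trans (lerD (lexx _) (IH b.+1 _)) _ => //.
rewrite -addn1 natrD.
apply: step_ineq => //.
by rewrite (ler_nat R 1 b).
Qed.

Lemma group_bound (F : seq nat -> R) (X : seq (seq nat)) (b : nat) (e : R) :
  (1 <= b)%N -> 1 <= e ->
  (forall l, l \in X -> (b < head 0%N l)%N) ->
  (forall x : nat, (b < x)%N ->
     \sum_(l <- X | x == head 0%N l) F l <= ((x%:R : R) `^ (e + 1))^-1) ->
  \sum_(l <- X) F l <= ((b%:R : R) `^ e)^-1.
Proof.
move=> b1 e1 hX hx.
set M := (\max_(l <- X) head 0%N l)%N.
have -> : \sum_(l <- X) F l =
   \sum_(l <- X) \sum_(x <- iota b.+1 M | x == head 0%N l) F l.
  rewrite big_seq [RHS]big_seq; apply: eq_bigr => l lX.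
  rewrite -big_filter filter_pred1_uniq ?iota_uniq ?big_seq1 //.
  rewrite mem_iota hX //= addSn ltnS.
  apply: leq_trans (leq_addl _ _).
  by apply: (@leq_bigmax_seq _ X xpredT (head 0%N)).
under eq_bigr do rewrite big_mkcond.
rewrite exchange_big /=.
under eq_bigr do rewrite -big_mkcond.
apply: le_trans (tele e b M e1 b1).
rewrite big_seq [X in _ <= X]big_seq; apply: ler_sum => x.
rewrite mem_iota => /andP[bx _]; exact: hx.
Qed.

Variables (s g : R).

Definition w (l : seq nat) : R :=
  (((\prod_(i < (size l).-1) (nth 0%N l i)%:R) `^ (2 * s)) *
   ((nth 0%N l (size l).-1)%:R `^ g))^-1.

Lemma w_cons (x : nat) l : l != [::] ->
  w (x :: l) = ((x%:R : R) `^ (2 * s))^-1 * w l.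
Proof.
case: l => [//|y l] _.
rewrite /w /= big_ord_recl /=.
rewrite powRM ?ler0n //.
rewrite -mulrA invfM; congr (_ * (_ * _)^-1); congr (_ `^ _).
by apply: prodr_ge0 => i _; rewrite ler0n.
Qed.

Lemma w_single (x : nat) : w [:: x] = ((x%:R : R) `^ g)^-1.
Proof. by rewrite /w /= big_ord0 powR1 mul1r. Qed.

Lemma main_bound (k : nat) : forall (b : nat) (X : seq (seq nat)),
  (1 <= b)%N -> uniq X ->
  (forall l, l \in X -> [/\ size l = k.+1, sorted ltn l & all (fun y => b < y)%N l]) ->
  0 < s -> s <= 1 / 2 ->
  2 - k%:R * (2 * s - 1) <= g ->
  \sum_(l <- X) w l <= ((b%:R : R) `^ (g + k%:R * (2 * s - 1) - 1))^-1.
Proof.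
elim: k => [|k IH] b X b1 uX hX s0 s1 hg.
  rewrite mul0r addr0.
  apply: group_bound => //.
  - by rewrite mul0r subr0 in hg; lra.
  - move=> l /hX [] ; case: l => [//|y l] /= _ _ /andP[]//.
  move=> x bx.
  rewrite subrK -big_filter.
  set Y := seq.filter _ X.
  have hY : forall l, l \in Y -> l = [:: x].
    move=> l; rewrite mem_filter => /andP[/eqP -> /hX[]].
    by case: l => [|y [|z l]] //=.
  have sY : (size Y <= 1)%N.
    rewrite -[1%N]/(size [:: [:: x]]); apply: uniq_leq_size.
      by rewrite filter_uniq.
    by move=> l /hY ->; rewrite inE.
  case: Y hY sY => [|y [|z Y]] hY sY //.
    by rewrite big_nil invr_ge0 powR_ge0.
  by rewrite big_seq1 (hY y) ?inE // w_single.
have hk : 2 - k%:R * (2 * s - 1) <= g.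
  by apply: le_trans hg; rewrite -addn1 natrD mulrDl mul1r; lra.
apply: group_bound => //.
- by rewrite -addn1 natrD mulrDl mul1r in hg *; lra.
- move=> l /hX [] ; case: l => [//|y l] /= _ _ /andP[]//.
move=> x bx.
rewrite -big_filter.
set Y := seq.filter _ X.
have hY : forall l, l \in Y -> l = x :: behead l /\ behead l != [::].
  move=> l; rewrite mem_filter => /andP[/eqP -> /hX[]].
  by case: l => [|y [|z l]] //=.
have -> : \sum_(l <- Y) w l = ((x%:R : R) `^ (2 * s))^-1 * \sum_(l <- map behead Y) w l.
  rewrite big_map mulr_sumr big_seq [RHS]big_seq; apply: eq_bigr => l /hY [el ne].
  by rewrite el w_cons.
have x1 : (1 <= x)%N by apply: leq_trans bx.
apply: le_trans (ler_wpM2l _ (IH x _ x1 _ _ s0 s1 hk)) _.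
- by rewrite invr_ge0 powR_ge0.
- rewrite map_inj_in_uniq ?filter_uniq //.
  by move=> l1 l2 /hY [-> _] /hY [-> _] /= ->.
- move=> l' /mapP [l lY ->].
  have [el _] := hY l lY.
  move: lY; rewrite mem_filter => /andP[_ /hX[]].
  rewrite el /= => [[sz]] pth _; split => //.
  + exact: path_sorted pth.
  + exact: order_path_min ltn_trans pth.
rewrite -invfM -powRD; last by rewrite pnatr_eq0 -lt0n x1 implybT.
suff -> : 2 * s + (g + k%:R * (2 * s - 1) - 1) = g + k.+1%:R * (2 * s - 1) - 1 + 1 by [].
by rewrite -addn1 natrD; ring.
Qed.

End Aux.

Theorem lemma2p3 (R : realType) (c n : nat) (s gamma : R) :
  (2 <= c)%N -> (2 <= n)%N -> 0 < s -> s <= 1 / 2 ->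
  2 - (n%:R - 1) * (2 * s - 1) <= gamma ->
  (\esum_(a in [set a : n.-tuple nat | admissible c a])
      (summand n s gamma a)%:E
   <= (((c%:R - 1) `^ (gamma + n%:R * (2 * s - 1) - 2 * s))^-1)%:E)%E.
Proof.
move=> c2 n2 s0 s1 hg.
apply: ge_ereal_sup => /= _ [X [finX XI]] <-.
rewrite fsbig_finite // sumEFin lee_fin.
have -> : \sum_(t <- fset_set X) summand n s gamma t =
          \sum_(l <- [seq val t | t <- fset_set X]) @w R s gamma l.
  by rewrite big_map; apply: eq_bigr => t _; rewrite /summand /w size_tuple.
have nE : n = n.-1.+1 by rewrite prednK // ltnW.
have cE : c = c.-1.+1 by rewrite prednK // ltnW.
have -> : (c%:R - 1 : R) = (c.-1)%:R by rewrite {1}cE -addn1 natrD addrK.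
have -> : gamma + n%:R * (2 * s - 1) - 2 * s =
          gamma + (n.-1)%:R * (2 * s - 1) - 1.
  by rewrite {1}nE -addn1 natrD; ring.
apply: main_bound => //.
- by rewrite -subn1 subn_gt0.
- by rewrite map_inj_uniq ?fset_uniq //; exact: val_inj.
- move=> l /mapP [t tX ->].
  have /XI /= /andP[ha hs] : X t by apply/set_mem; rewrite -(in_fset_set finX).
  split => //; first by rewrite size_tuple -nE.
  by apply/allP => y /(allP ha) cy; rewrite {1}cE in cy.
- by have -> : (n.-1)%:R = n%:R - 1 :> R by rewrite {2}nE -addn1 natrD addrK.
Qed.
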